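(* Let $D$ be an oriented graph with $n$ vertices containing no transmitter. Then there exists an oriented graph $D_2$ containing $D$ as an induced suboriented graph such that the set of weak kings of $D_2$ is exactly the vertex set of $D$.
   Context: An oriented graph is a digraph with no loops and no pair of symmetric arcs. A transmitter is a vertex of indegree $0$. For vertices $u,v$ write $u(1\text{-}0)v$ if there is an arc from $u$ to $v$, and $u(0\text{-}0)v$ if there is no arc between $u$ and $v$. A vertex $v$ is weakly reachable within two steps from $u$ if $u(1\text{-}0)v$, or $u(0\text{-}0)v$, or for some vertex $w$ one has $u(1\text{-}0)w(1\text{-}0)v$, or $u(1\text{-}0)w(0\text{-}0)v$, or $u(0\text{-}0)w(1\text{-}0)v$. A vertex $u$ of an oriented graph is a weak king if every other vertex is weakly reachable within two steps from $u$. *)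

(* Defs.v *)
From mathcomp Require Import all_boot.
Set Implicit Arguments. Unset Strict Implicit. Unset Printing Implicit Defensive.

Definition oriented (T : finType) (a : rel T) : Prop :=
  (forall x, ~~ a x x) /\ (forall x y, ~~ (a x y && a y x)).

Definition nonadj (T : finType) (a : rel T) (u v : T) : bool :=
  ~~ a u v && ~~ a v u.

Definition transmitter (T : finType) (a : rel T) (v : T) : bool :=
  [forall u, ~~ a u v].

Definition wreach (T : finType) (a : rel T) (u v : T) : bool :=
  [|| a u v, nonadj a u v |
      [exists w, [|| a u w && a w v, a u w && nonadj a w v
                   | nonadj a u w && a w v]]].

Definition weak_king (T : finType) (a : rel T) (u : T) : bool :=
  [forall v, (v != u) ==> wreach a u v].

(* Main.v *)
Require Import Defs.
From mathcomp Require Import all_boot.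

Set Implicit Arguments. Unset Strict Implicit. Unset Printing Implicit Defensive.

Lemma wr_arc (T : finType) (r : rel T) u v : r u v -> wreach r u v.
Proof. by rewrite /wreach => ->. Qed.
Lemma wr_non (T : finType) (r : rel T) u v : nonadj r u v -> wreach r u v.
Proof. by rewrite /wreach => ->; rewrite orbT. Qed.
Lemma wr_aa (T : finType) (r : rel T) u v w : r u w -> r w v -> wreach r u v.
Proof. move=> h1 h2; rewrite /wreach; apply/or3P; constructor 3; apply/existsP; exists w; by rewrite h1 h2. Qed.
Lemma wr_an (T : finType) (r : rel T) u v w : r u w -> nonadj r w v -> wreach r u v.
Proof. move=> h1 h2; rewrite /wreach; apply/or3P; constructor 3; apply/existsP; exists w; by rewrite h1 h2 orbT. Qed.
Lemma wr_na (T : finType) (r : rel T) u v w : nonadj r u w -> r w v -> wreach r u v.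
Proof. move=> h1 h2; rewrite /wreach; apply/or3P; constructor 3; apply/existsP; exists w; by rewrite h1 h2 !orbT. Qed.

Lemma wreach_transfer (T1 T2 : finType) (g : T1 -> T2) (h : T2 -> T1)
  (gK : cancel g h) (hK : cancel h g) (rb : rel T2) u v :
  wreach (fun x y => rb (g x) (g y)) u v = wreach rb (g u) (g v).
Proof.
rewrite /wreach /nonadj; congr [|| _, _ | _].
apply/existsP/existsP => [[w Hw]|[w Hw]]; first by exists (g w).
by exists (h w); rewrite hK.
Qed.

Lemma king_transfer (T1 T2 : finType) (g : T1 -> T2) (h : T2 -> T1)
  (gK : cancel g h) (hK : cancel h g) (rb : rel T2) u :
  weak_king (fun x y => rb (g x) (g y)) u = weak_king rb (g u).
Proof.
rewrite /weak_king; apply/forallP/forallP => H v.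
- have := H (h v); rewrite (wreach_transfer gK hK) hK.
  by rewrite -(inj_eq (can_inj hK)) gK.
- by have := H (g v); rewrite (wreach_transfer gK hK) (inj_eq (can_inj gK)).
Qed.

Definition bb n (a : rel 'I_n) (p : 'I_n -> 'I_n) (s t : 'I_n + 'I_n) : bool :=
  match s, t with
  | inl x, inl y => a x y
  | inl x, inr w => (x != w) && [|| x == p w, x == p (p w) | ~~ (a w x && ~~ a x (p w))]
  | inr w, inl x => x == w
  | inr v, inr w => p w == v
  end.

Lemma bb_oriented n (a : rel 'I_n) p : oriented a -> (forall v, a (p v) v) -> oriented (bb a p).
Proof.
move=> [irr asym] pP; split.
- case=> x /=; first exact: irr.
  apply/eqP => E; by have := irr x; rewrite -{1}E pP.
- case=> x; case=> y /=.
  + exact: asym.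
  + by case: (x =P y) => [->|]; rewrite ?eqxx ?andbF.
  + by case: (y =P x) => [->|]; rewrite ?eqxx.
  + apply/negP => /andP [/eqP E1 /eqP E2].
    by have := asym x y; rewrite -[in a x y]E1 -[in a y x]E2 !pP.
Qed.

Lemma bb_king n (a : rel 'I_n) p : oriented a -> (forall v, a (p v) v) ->
  forall x, weak_king (bb a p) (inl x).
Proof.
move=> [irr asym] pP x.
have asy u v : a u v -> a v u = false.
  by move=> h; apply/negbTE; have := asym u v; rewrite h.
have pne v : (p v == v) = false.
  by apply/negbTE/eqP => E; have := irr v; rewrite -{1}E pP.
apply/forallP => -[y|w]; apply/implyP => Hne.
- have xy : x != y by apply: contra Hne => /eqP ->.
  case Axy: (a x y); first exact: wr_arc.
  case Ayx: (a y x); last by apply: wr_non; rewrite /nonadj /= Axy Ayx.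
  case Axp: (a x (p y)); first by apply: (@wr_aa _ _ _ _ (inl (p y))) => //=.
  apply: (@wr_na _ _ _ _ (inr y)); last by rewrite /= eqxx.
  rewrite /nonadj /= xy /= Ayx Axp /= orbF andbT.
  apply/negP => /orP [/eqP E|/eqP E].
  + by rewrite E pP in Axy.
  + by rewrite E pP in Axp.
- case: (eqVneq w x) => [->|wx].
  + case Axpp: (a x (p (p x))).
    * apply: (@wr_aa _ _ _ _ (inr (p x))); last by rewrite /= eqxx.
      by rewrite /= eq_sym pne /= Axpp andbF !orbT.
    * apply: (@wr_na _ _ _ _ (inr (p x))); last by rewrite /= eqxx.
      rewrite /nonadj /= eq_sym pne /= pP Axpp /= orbF.
      apply/andP; split.
      - apply/negP => /orP [/eqP E|/eqP E].
        + by have := pP (p x); rewrite -E asy // pP.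
        + by rewrite {1}E pP in Axpp.
      - done.
  + case Bxw: (bb a p (inl x) (inr w)); first exact: wr_arc.
    by apply: wr_non; rewrite /nonadj Bxw /= eq_sym (negbTE wx).
Qed.

Lemma bb_notking n (a : rel 'I_n) p : oriented a -> (forall v, a (p v) v) ->
  forall w, ~~ weak_king (bb a p) (inr w).
Proof.
move=> [irr asym] pP w.
have asy u v : a u v -> a v u = false.
  by move=> h; apply/negbTE; have := asym u v; rewrite h.
have pne v : (p v == v) = false.
  by apply/negbTE/eqP => E; have := irr v; rewrite -{1}E pP.
apply/forallP => /(_ (inl (p w))) /implyP /(_ isT).
rewrite /wreach /nonadj /= pne eqxx /=.
case/existsP => -[y|y] /=.
- case: (eqVneq y w) => [->|yw] /=.
  + by rewrite asy ?pP.
  + by case: (a y (p w)); rewrite ?andbF ?andbT ?orbT.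
- case: (eqVneq (p y) w) => [E|yw] /=.
  + case: (eqVneq (p w) y) => [E2|ne].
    * by have := pP y; rewrite E -E2 asy ?pP.
    * by rewrite E eqxx !orbT.
  + by case: (p w == y).
Qed.

Theorem theorem10 (n : nat) (a : rel 'I_n) :
  oriented a ->
  (forall v, ~~ transmitter a v) ->
  exists (m : nat) (a2 : rel 'I_m) (f : 'I_n -> 'I_m),
    [/\ oriented a2,
        injective f,
        (forall x y, a2 (f x) (f y) = a x y)
      & (forall u, weak_king a2 u <-> exists x, u = f x)].
Proof.
move=> oa nt.
pose p v := odflt v [pick u | a u v].
have pP v : a (p v) v.
  rewrite /p; case: pickP => //= H.
  by have := nt v; rewrite /transmitter; move/forallPn => [u]; rewrite H.
have ob := bb_oriented oa pP.
exists (n + n), (fun u v => bb a p (split u) (split v)), (fun x => unsplit (inl x)).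
split.
- case: ob => irr asym; split => x; [exact: irr | move=> y; exact: asym].
- by move=> x y /(congr1 split); rewrite !unsplitK => -[].
- by move=> x y; rewrite !unsplitK.
- move=> u; rewrite (king_transfer (@splitK n n) (@unsplitK n n)).
  case E: (split u) => [x|w]; split.
  + by move=> _; exists x; rewrite -E splitK.
  + by move=> _; exact: bb_king.
  + by move=> H; have := bb_notking oa pP w; rewrite H.
  + by move=> [x Ex]; move: E; rewrite Ex unsplitK.
Qed.
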